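(* For every bracket pattern $w$, $A(A(w))=A(w)$. In particular $\langle\!\langle A(w)\rangle\!\rangle=\langle\!\langle w\rangle\!\rangle$.
   Context: $\mathbb N=\{1,2,\dots\}$, $\mathbb N_0=\mathbb N\cup\{0\}$. A bracket pattern is a non-empty finite subset $w\subseteq\mathbb N$; $\|w\|:=\max(w)$. For bracket patterns $w,w'$: superposition $w\cup w'$; for $j\in w$ the projection $\cap_j w:=\{i\in w\mid i\le j\}$; the dual $w^\dagger:=\{\|w\|-i\mid i\in\mathbb N_0,\ i<\|w\|,\ i\notin w\}$. A bracket pattern category is a set of bracket patterns closed under superposition, duals and projections; $\langle\!\langle w\rangle\!\rangle$ denotes the smallest bracket pattern category containing $w$. The completion of a bracket pattern $w$ is $A(w):=\{j-i\mid j\in w,\ i\in\mathbb N_0,\ i\notin w,\ i<j\}$ (itself a bracket pattern). *)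

(* Defs.v *)
From HB Require Import structures.
From mathcomp Require Import all_boot finmap.

Set Implicit Arguments.
Unset Strict Implicit.
Unset Printing Implicit Defensive.

Local Open Scope fset_scope.

Definition is_bracket_pattern (w : {fset nat}) : bool :=
  (w != fset0) && (0%N \notin w).

Definition bp_norm (w : {fset nat}) : nat := \max_(i <- w) i.

(* superposition w ∪ w' is fsetU; projection ∩_j w for j ∈ w *)
Definition bp_proj (j : nat) (w : {fset nat}) : {fset nat} :=
  [fset i in w | (i <= j)%N].

Definition bp_dual (w : {fset nat}) : {fset nat} :=
  [fset (bp_norm w - i)%N | i in [seq i <- iota 0 (bp_norm w) | i \notin w]].

Definition completion (w : {fset nat}) : {fset nat} :=
  [fset (j - i)%N | j in w,
     i in [seq i <- iota 0 (bp_norm w) | (i \notin w) && (i < j)%N]].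

Definition is_bp_category (C : {fset nat} -> Prop) : Prop :=
  [/\ (forall w, C w -> is_bracket_pattern w),
      (forall w w', C w -> C w' -> C (w `|` w')),
      (forall w, C w -> C (bp_dual w)) &
      (forall w j, C w -> j \in w -> C (bp_proj j w))].

Definition generated_category (w : {fset nat}) : {fset nat} -> Prop :=
  fun v => forall C, is_bp_category C -> C w -> C v.

(* Main.v *)
Require Import Defs.
From HB Require Import structures.
From mathcomp Require Import all_boot finmap.
From mathcomp Require Import zify.
Local Open Scope fset_scope.

Lemma norm_ge (w : {fset nat}) j : j \in w -> (j <= bp_norm w)%N.
Proof. move=> jw; rewrite /bp_norm; exact: leq_bigmax_seq. Qed.
Arguments norm_ge {w j}.

Lemma max_seq_in (s : seq nat) : s != [::] -> \max_(i <- s) i \in s.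
Proof.
elim: s => // x s IH _; rewrite big_cons inE.
case: s IH => [|y s] IH; first by rewrite big_nil maxn0 eqxx.
have := IH isT; rewrite big_cons; set m := maxn y _ => mi.
by case: (leqP x m) => h; rewrite ?mi ?orbT ?eqxx.
Qed.

Lemma norm_in (w : {fset nat}) : w != fset0 -> bp_norm w \in w.
Proof.
move=> wn; rewrite /bp_norm; apply: max_seq_in.
by apply: contra wn => /eqP e; apply/eqP/fsetP => x; rewrite inE -[x \in w]/(x \in (w : seq nat)) e.
Qed.
Arguments norm_in {w}.


Lemma mem_completion (w : {fset nat}) x :
  (x \in completion w) <-> exists j i, [/\ j \in w, i \notin w, (i < j)%N & x = j - i].
Proof.
split.
  move=> /imfset2P [j jw [i iin ->]]; exists j, i; move: iin.
  by rewrite mem_filter => /andP[/andP[-> ->]].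
move=> [j [i [jw iw ij ->]]]; apply/imfset2P; exists j => //; exists i => //.
rewrite /= mem_filter iw ij mem_iota /= add0n.
exact: leq_trans ij (@norm_ge w j jw).
Qed.

Lemma mem_dual (w : {fset nat}) x :
  (x \in bp_dual w) <-> exists i, [/\ i \notin w, (i < bp_norm w)%N & x = bp_norm w - i].
Proof.
split.
  move=> /imfsetP [i iin ->]; exists i; move: iin.
  by rewrite /= mem_filter mem_iota => /andP[-> /andP[_]]; rewrite add0n.
move=> [i [iw il ->]]; apply/imfsetP; exists i => //.
by rewrite /= mem_filter iw mem_iota add0n.
Qed.

Lemma mem_proj (w : {fset nat}) j x : (x \in bp_proj j w) = (x \in w) && (x <= j)%N.
Proof. by rewrite /bp_proj !inE. Qed.

Lemma norm_eq (w : {fset nat}) m :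
  m \in w -> (forall x, x \in w -> (x <= m)%N) -> bp_norm w = m.
Proof.
move=> mw h; apply/eqP; rewrite eqn_leq (norm_ge mw) andbT; apply: h.
by apply: norm_in; apply/eqP => e; rewrite e inE in mw.
Qed.

Lemma sub_completion (w : {fset nat}) x : 0 \notin w -> x \in w -> x \in completion w.
Proof.
move=> w0 xw; apply/mem_completion; exists x, 0; split => //.
  by case: x xw w0 => // ->.
by rewrite subn0.
Qed.

Lemma completion_pos (w : {fset nat}) : 0 \notin completion w.
Proof.
by apply/negP => /mem_completion [j [i [_ _ ij e]]]; lia.
Qed.

Lemma norm_completion (w : {fset nat}) :
  is_bracket_pattern w -> bp_norm (completion w) = bp_norm w.
Proof.
move=> /andP[wn w0]; apply: norm_eq; first by apply: sub_completion => //; exact: norm_in.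
move=> x /mem_completion [j [i [jw _ _ ->]]].
have := @norm_ge w j jw; lia.
Qed.

Lemma AA (w : {fset nat}) : is_bracket_pattern w -> completion (completion w) = completion w.
Proof.
move=> /andP[wn w0]; apply/fsetP => x; apply/idP/idP; last first.
  by apply: sub_completion; exact: completion_pos.
move=> /mem_completion [j [i [jA iA ij ->]]].
move: (jA) => /mem_completion [b [a [bw aw ab ej]]].
case: (posnP i) => [->|ip]; first by rewrite subn0.
case: (boolP ((i + a)%N \in w)) => h.
  exfalso; move/negP: iA; apply; apply/mem_completion; exists (i + a)%N, a; split => //; lia.
apply/mem_completion; exists b, (i + a)%N; split => //; lia.
Qed.

Lemma projS (w : {fset nat}) k x : x \in bp_proj k w -> x \in w.
Proof. by rewrite mem_proj => /andP[]. Qed.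

Lemma compl_in C : is_bp_category C ->
  forall n (v : {fset nat}), (#|` v| <= n)%N -> C v -> C (completion v).
Proof.
move=> [Cb CU CD CP]; elim=> [|n IH] v vn Cv.
  have /andP[vne _] := Cb _ Cv.
  have := norm_in vne; move: vn; rewrite leqn0 cardfs_eq0 => /eqP ->; by rewrite inE.
have /andP[vne v0] := Cb _ Cv.
set m := bp_norm v; have mv : m \in v := norm_in vne.
set v' := v `\ m.
have [v'0|v'n] := eqVneq v' fset0.
  suff -> : completion v = bp_dual v by apply: CD.
  apply/fsetP => x; apply/idP/idP.
    move=> /mem_completion [j [i [jv iv ij ->]]].
    have jm : j = m.
      have : j \notin v' by rewrite v'0 inE.
      by rewrite in_fsetD1 jv andbT negbK => /eqP.
    by subst j; apply/mem_dual; exists i; split.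
  move=> /mem_dual [i [iv im ->]]; apply/mem_completion; exists m, i; split => //.
have kv' : bp_norm v' \in v' := norm_in v'n.
set k := bp_norm v' in kv'.
move: (kv'); rewrite in_fsetD1 => /andP[km kv].
have klm : (k < m)%N by rewrite ltn_neqAle km (norm_ge kv).
suff -> : completion v = bp_dual v `|` completion (bp_proj k v).
  apply: CU; first exact: CD.
  apply: IH; last exact: CP.
  have : (#|` bp_proj k v| <= #|` v'|)%N.
    by apply/fsubset_leq_card/fsubsetP => x xp; move: (xp); rewrite mem_proj in_fsetD1 => /andP[-> xk]; rewrite andbT; apply: contraTneq xk => ->; rewrite -ltnNge.
  by move: vn; rewrite (cardfsD1 m v) mv add1n ltnS => h1 h2; exact: leq_trans h2 h1.
apply/fsetP => x; rewrite in_fsetU; apply/idP/idP.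
  move=> /mem_completion [j [i [jv iv ij ->]]].
  case: (eqVneq j m) => [jm|jm].
    by subst j; apply/orP; left; apply/mem_dual; exists i; split.
  have jk : (j <= k)%N by apply: norm_ge; rewrite in_fsetD1 jm.
  apply/orP; right; apply/mem_completion; exists j, i; split => //.
    by rewrite mem_proj jv.
  by rewrite mem_proj negb_and iv.
move=> /orP[/mem_dual [i [iv im ->]]|/mem_completion [j [i [jv iv ij ->]]]].
  by apply/mem_completion; exists m, i; split.
move: jv; rewrite mem_proj => /andP[jv jk].
apply/mem_completion; exists j, i; split => //.
by move: iv; rewrite mem_proj negb_and => /orP[//|]; rewrite -ltnNge => ki; lia.
Qed.

Lemma proj_back C : is_bp_category C ->
  forall n (v a : {fset nat}), (#|` v| <= n)%N -> C a ->
  is_bracket_pattern v -> bp_norm a = bp_norm v ->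
  (forall x, x \in completion v -> x \in a) -> C v.
Proof.
move=> [Cb CU CD CP]; elim=> [|n IH] v a vn Ca /andP[vne v0] na sub.
  have := norm_in vne; move: vn; rewrite leqn0 cardfs_eq0 => /eqP ->; by rewrite inE.
have /andP[ane a0] := Cb _ Ca.
set m := bp_norm v; have mv : m \in v := norm_in vne.
have mpos : (0 < m)%N by case: (posnP m) mv v0 => // ->->.
have dsub : forall x, x \in bp_dual a -> x \in v.
  move=> x /mem_dual [i [ia il ->]]; rewrite na -/m.
  case: (posnP i) => [->|ip]; first by rewrite subn0.
  apply/negPn/negP => h; move/negP: ia; apply; apply: sub; apply/mem_completion.
  exists m, (m - i)%N; split => //; rewrite na -/m in il; lia.
have dm : m \in bp_dual a by apply/mem_dual; exists 0; rewrite na subn0.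
set v' := v `\ m.
have [v'0|v'n] := eqVneq v' fset0.
  suff -> : v = bp_dual a by apply: CD.
  apply/fsetP => x; apply/idP/idP; last exact: dsub.
  move=> xv; have : x \notin v' by rewrite v'0 inE.
  by rewrite in_fsetD1 xv andbT negbK => /eqP ->.
have kv' : bp_norm v' \in v' := norm_in v'n.
set k := bp_norm v' in kv'.
move: (kv'); rewrite in_fsetD1 => /andP[km kv].
have klm : (k < m)%N by rewrite ltn_neqAle km (norm_ge kv).
have ka : k \in a by apply: sub; apply: sub_completion.
suff -> : v = bp_dual a `|` bp_proj k v.
  apply: CU; first exact: CD.
  apply: (IH _ (bp_proj k a)); last first.
  - move=> x /mem_completion [j [i [jv iv ij ->]]].
    move: jv; rewrite mem_proj => /andP[jv jk].
    rewrite mem_proj; apply/andP; split; last by lia.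
    apply: sub; apply/mem_completion; exists j, i; split => //.
    by move: iv; rewrite mem_proj negb_and => /orP[//|]; rewrite -ltnNge => ki; lia.
  - rewrite (@norm_eq _ k) ?(@norm_eq (bp_proj k v) k) // ?mem_proj ?kv ?ka ?leqnn //.
    + by move=> x; rewrite mem_proj => /andP[].
    + by move=> x; rewrite mem_proj => /andP[].
  - apply/andP; split; last by rewrite mem_proj (negbTE v0).
    apply/eqP => e; have : k \in bp_proj k v by rewrite mem_proj kv leqnn.
    by rewrite e inE.
  - exact: CP.
  have : (#|` bp_proj k v| <= #|` v'|)%N.
    by apply/fsubset_leq_card/fsubsetP => x xp; move: (xp); rewrite mem_proj in_fsetD1 => /andP[-> xk]; rewrite andbT; apply: contraTneq xk => ->; rewrite -ltnNge.
  by move: vn; rewrite (cardfsD1 m v) mv add1n ltnS => h1 h2; exact: leq_trans h2 h1.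
apply/fsetP => x; rewrite in_fsetU; apply/idP/idP.
  move=> xv; case: (eqVneq x m) => [->|xm]; first by rewrite dm.
  have xk : (x <= k)%N by apply: norm_ge; rewrite in_fsetD1 xm.
  by rewrite mem_proj xv xk orbT.
by move=> /orP[/dsub //|/projS].
Qed.

Theorem lemma7p12 (w : {fset nat}) :
  is_bracket_pattern w ->
  completion (completion w) = completion w /\
  (forall v : {fset nat},
      generated_category (completion w) v <-> generated_category w v).
Proof.
move=> bw; split; first exact: AA.
move=> v; split => h C HC Cw; apply: h => //.
  exact: (compl_in _ HC _ _ (leqnn _) Cw).
apply: (proj_back _ HC _ _ _ (leqnn _) Cw bw) => //; exact: norm_completion.
Qed.
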